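(* Let $q\ge 2$, $r\ge 1$, $\rho\ge 2$ be integers and $N=r+\rho-1$. Assume that there exists a $q$-ary MDS code of length $N$ and minimum distance $\rho$. Then $R_q(r,\rho,0)=\frac{r}{N}$.
   Context: A $q$-ary code of length $n$ is a subset $\mathcal{C}\subseteq Q^n$, $|Q|=q$, with minimum distance the minimum Hamming distance between distinct codewords and dimension $k=\log_q|\mathcal{C}|$. For $I\subseteq[n]$, $\mathcal{C}_I$ is the projection onto coordinates in $I$. $\mathcal{C}$ is an $(n,k,r,\rho)$ LRC code if every coordinate $i\in[n]$ lies in a subset $\mathcal{R}_i$ of size at most $r+\rho-1$ with $\mathcal{C}_{\mathcal{R}_i}$ of minimum distance at least $\rho$. Let $M_q(n,r,\rho,\delta n)$ be the maximum cardinality of a $q$-ary $(n,k,r,\rho)$ LRC code with minimum distance $\delta n$, and $R_q(r,\rho,\delta)=\limsup_{n\to\infty}\frac1n\log_q M_q(n,r,\rho,\delta n)$. An MDS code of length $N$ and distance $\rho$ is a $q$-ary code of length $N$, minimum distance $\rho$ and cardinality $q^{N-\rho+1}$. *)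

(* Defs.v *)
From HB Require Import structures.
From mathcomp Require Import all_boot all_order all_algebra.
From mathcomp Require Import all_classical all_reals all_analysis.
Set Implicit Arguments. Unset Strict Implicit. Unset Printing Implicit Defensive.
Import Order.TTheory GRing.Theory Num.Theory.
Local Open Scope ring_scope.

Definition word (A : finType) (n : nat) := {ffun 'I_n -> A}.
Definition code (A : finType) (n : nat) := {set word A n}.

Definition hdist (A : finType) (n : nat) (x y : word A n) : nat :=
  #|[set i : 'I_n | x i != y i]|.

(* minimum distance of C is at least d (vacuous if |C| <= 1) *)
Definition min_dist_ge (A : finType) (n : nat) (C : code A n) (d : nat) : bool :=
  [forall x in C, forall y in C, (x != y) ==> (d <= hdist x y)%N].

Definition min_dist_eq (A : finType) (n : nat) (C : code A n) (d : nat) : bool :=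
  min_dist_ge C d &&
  [exists x in C, exists y in C, (x != y) && (hdist x y == d)].

(* projection C_I of C onto the coordinates in I : coordinates outside I
   are erased (set to None), so Hamming distances of projected words are
   distances restricted to I. *)
Definition proj (A : finType) (n : nat) (I : {set 'I_n}) (C : code A n)
  : code (option A) n :=
  [set ([ffun j => if j \in I then Some (x j) else None] : word (option A) n) | x : word A n in C].

(* (n,k,r,rho) LRC code (k = log_q |C| is not constrained) *)
Definition is_LRC (A : finType) (n r rho : nat) (C : code A n) : bool :=
  [forall i : 'I_n, exists Ri : {set 'I_n},
     [&& i \in Ri, (#|Ri| <= r + rho - 1)%N & min_dist_ge (proj Ri C) rho]].

Definition M_LRC (R : realType) (q n r rho : nat) (delta : R) : nat :=
  \max_(C : code 'I_q n |
          is_LRC r rho C &&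
          [forall x in C, forall y in C,
             (x != y) ==> (delta * n%:R <= (hdist x y)%:R)])
     #|C|.

Local Open Scope ereal_scope.
Definition R_LRC (R : realType) (q r rho : nat) (delta : R) : \bar R :=
  limn_esup (fun n : nat =>
    ((ln (M_LRC q n r rho delta)%:R / ln q%:R) / n%:R)%:E).

Definition exists_MDS (q N rho : nat) : Prop :=
  exists C : code 'I_q N,
    min_dist_eq C rho /\ #|C| = (q ^ (N - rho + 1))%N.

(* Main.v *)
Require Import Defs.
From HB Require Import structures.
From mathcomp Require Import all_boot all_order all_algebra.
From mathcomp Require Import all_classical all_reals all_analysis.
From mathcomp Require Import zify.
From mathcomp Require Import finset fintype.
From mathcomp Require Import ring lra.
Import Order.TTheory GRing.Theory Num.Theory.
Section RealPart.
Local Open Scope ring_scope.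
Local Open Scope classical_set_scope.
Lemma esup_squeeze (R : realType) (u : nat -> R) (l c : R) :
  (forall n, l - c * harmonic n <= u n <= l) ->
  limn_esup (fun n => (u n)%:E) = l%:E.
Proof.
move=> H; apply: (cvg_limn_einf_sup _).2.
apply: cvg_EFin; first by apply: nearW.
apply: (@squeeze_cvgr _ _ _ _ (fun n => l - c * harmonic n) (cst l)).
- by apply: nearW => n; exact: H.
- have : (fun n => l - c * harmonic n) @ \oo --> l - c * 0.
    apply: cvgB; first exact: cvg_cst.
    apply: cvgMr; exact: cvg_harmonic.
  by rewrite mulr0 subr0.
- by apply/cvgrPdist_lt => e e0; apply: nearW => n; rewrite /cst subrr normr0.
Qed.
Local Close Scope classical_set_scope.

Lemma real_bound (R : realFieldType) (a r m n N : R) : 0 < N -> 1 <= n -> 0 <= r -> 0 <= m ->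
  r * m <= a -> N * a <= r * n -> n + 1 <= (m + 1) * N ->
  r / N - 2 * r * (n + 1)^-1 <= a / n <= r / N.
Proof.
move=> hN hn hr hm h1 h2 h3.
have hn0 : 0 < n by lra.
have hn1 : 0 < n + 1 by lra.
have ey : N * N^-1 = 1 by rewrite mulfV // gt_eqF.
have ez : (n + 1) * (n + 1)^-1 = 1 by rewrite mulfV // gt_eqF.
have ew : n * n^-1 = 1 by rewrite mulfV // gt_eqF.
have py : 0 < N^-1 by rewrite invr_gt0.
have pz : 0 < (n + 1)^-1 by rewrite invr_gt0.
have pw : 0 < n^-1 by rewrite invr_gt0.
set y := N^-1 in ey py *; set z := (n + 1)^-1 in ez pz *; set w := n^-1 in ew pw *.

apply/andP; split.
  have hw : w <= 2 * z by nra.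
  have hA : r * m * w <= a * w by rewrite ler_wpM2r // ltW.
  have hB : (n + 1) * y - 1 <= m.
    have : (n + 1) * y <= (m + 1) * N * y by nra.
    have -> : (m + 1) * N * y = m + 1 by rewrite -mulrA ey mulr1.
    lra.
  have hB' : r * ((n + 1) * y - 1) * w <= r * m * w by apply: ler_wpM2r; [exact: ltW | exact: ler_wpM2l].
  have hC : r * ((n + 1) * y - 1) * w = r * y + r * y * w - r * w.
    have -> : r * ((n + 1) * y - 1) * w = r * y * (n * w) + r * y * w - r * w by ring.
    by rewrite ew mulr1.
  have hD : 0 <= r * y * w by apply: mulr_ge0 => //; [apply: mulr_ge0; lra | lra].
  have hE : r * w <= 2 * r * z by nra.
  lra.
nra.
Qed.

End RealPart.

Lemma local_agree (A : finType) (n rho : nat) (C : Defs.code A n) (Ri : {set 'I_n}) x y :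
  min_dist_ge (Defs.proj Ri C) rho -> x \in C -> y \in C ->
  (#|[set j in Ri | x j != y j]| < rho)%N -> forall j, j \in Ri -> x j = y j.
Proof.
move=> /forallP Hm xC yC Hlt j jR.
set px : word (option A) n := [ffun j => if j \in Ri then Some (x j) else None].
set py : word (option A) n := [ffun j => if j \in Ri then Some (y j) else None].
have pxC : px \in Defs.proj Ri C by apply/imsetP; exists x.
have pyC : py \in Defs.proj Ri C by apply/imsetP; exists y.
have [exy|nxy] := eqVneq px py.
  by move/ffunP: exy => /(_ j); rewrite !ffunE jR => -[].
move: (Hm px) => /implyP /(_ pxC) /forallP /(_ py) /implyP /(_ pyC) /implyP /(_ nxy).
rewrite /hdist.
have -> : [set i | px i != py i] = [set j in Ri | x j != y j].
  apply/setP => k; rewrite !inE !ffunE; case: (k \in Ri) => //=.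
by rewrite leqNgt Hlt.
Qed.

Lemma subset_card (T : finType) (S : {set T}) k :
  (k <= #|S|)%N -> exists2 B : {set T}, B \subset S & #|B| = k.
Proof.
elim: k => [|k IH] hk.
  exists (@finset.set0 T). exact: sub0set. exact: cards0.
have [B BS cB] := IH (ltnW hk).
have : (0 < #|S :\: B|)%N by rewrite cardsD (setIidPr BS) cB subn_gt0.
case/card_gt0P => z; rewrite inE => /andP [zB zS].
exists (z |: B); first by rewrite subUset sub1set zS.
by rewrite cardsU1 zB cB.
Qed.

Lemma arith_step (r rho s d v : nat) : (1 <= rho)%N -> (s <= r + rho - 1)%N ->
  ((r + rho - 1) * d <= r * v)%N ->
  ((r + rho - 1) * (d + (s - (rho - 1))) <= r * (v + s))%N.
Proof.
move=> hrho; rewrite -addnBA //; set a := (rho - 1) => hs hd.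
rewrite mulnDr mulnDr leq_add //.
case: (leqP s a) => h.
  by move: h; rewrite -subn_eq0 => /eqP ->; rewrite muln0.
have [t st] : exists t, s = (a + t)%N by exists (s - a); rewrite subnKC // ltnW.
rewrite st addKn in hs *; have ht : (t <= r)%N by lia.
nia.
Qed.

Lemma grow (A : finType) (n r rho : nat) (C : Defs.code A n) :
  is_LRC r rho C -> (1 <= rho)%N -> forall k (U : {set 'I_n}), (#|U| <= k)%N ->
  exists D V : {set 'I_n}, [/\ U \subset V, ((r + rho - 1) * #|D| <= r * #|V|)%N &
    forall x y, x \in C -> y \in C -> (forall j, j \in D -> x j = y j) ->
      forall j, j \in V -> x j = y j].
Proof.
move=> /forallP HL hrho; elim=> [|k IH] U hU.
  exists (@finset.set0 _), (@finset.set0 _); split => //.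
  by move: hU; rewrite leqn0 cards_eq0 => /eqP ->.
  by rewrite !finset.cards0 !muln0.
have [->|[i iU]] := set_0Vmem U.
  exists (@finset.set0 _), (@finset.set0 _); split => //; first by rewrite !finset.cards0 !muln0.
have hU' : (#|U :\ i| <= k)%N by move: hU; rewrite (cardsD1 i U) iU.
have [D' [V' [UV' hcard' Hag']]] := IH _ hU'.
have [iV'|niV'] := boolP (i \in V').
  exists D', V'; split => //.
  apply/subsetP => j jU; have [->//|nji] := eqVneq j i.
  by apply: (subsetP UV'); rewrite !inE nji.
have /existsP [Ri /and3P [iRi cRi Hmd]] := HL i.
set S := Ri :\: V'.
have [T TS cT] := @subset_card _ S (#|S| - (rho - 1)) (leq_subr _ _).
exists (D' :|: T), (V' :|: Ri); split.
- apply/subsetP => j jU; have [->|nji] := eqVneq j i; first by rewrite inE iRi orbT.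
  by rewrite inE (subsetP UV') // !inE nji.
- have -> : #|V' :|: Ri| = (#|V'| + #|S|)%N.
    by rewrite cardsU /S cardsD [Ri :&: V']setIC addnBA ?subset_leq_card ?subsetIr.
  have hS : (#|S| <= r + rho - 1)%N.
    by apply: leq_trans cRi; rewrite /S cardsD leq_subr.
  apply: leq_trans (@arith_step r rho #|S| _ _ hrho hS hcard').
  rewrite -cT; apply: leq_mul => //; rewrite cardsU; exact: leq_subr.
- move=> x y xC yC Hxy.
  have agV' : forall j, j \in V' -> x j = y j.
    by apply: Hag' => // j jD; apply: Hxy; rewrite inE jD.
  have agR : forall j, j \in Ri -> x j = y j.
    apply: local_agree Hmd xC yC _.
    have sub : [set j in Ri | x j != y j] \subset S :\: T.
      apply/subsetP => j; rewrite !inE => /andP [jR nxy].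
      rewrite jR andbT; apply/andP; split.
        by apply: contra nxy => jT; apply/eqP/Hxy; rewrite inE jT orbT.
      by apply: contra nxy => jV; apply/eqP/agV'.
    apply: leq_ltn_trans (subset_leq_card sub) _.
    rewrite (cardsDS TS) cT.
    have : (0 < rho)%N := hrho.
    lia.
  by move=> j; rewrite inE => /orP [/agV'|/agR].
Qed.

Lemma count_inj (A : finType) n (C : Defs.code A n) (D : {set 'I_n}) :
  (forall x y, x \in C -> y \in C -> (forall j, j \in D -> x j = y j) -> x = y) ->
  (#|C| <= #|A| ^ #|D|)%N.
Proof.
move=> H.
pose f (x : word A n) : {ffun 'I_#|D| -> A} := [ffun k => x (enum_val k)].
rewrite -(card_in_imset (f:=f)); last first.
  move=> x y xC yC /ffunP fxy; apply: H => // j jD.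
  by have := fxy (enum_rank_in jD j); rewrite !ffunE enum_rankK_in.
by apply: leq_trans (max_card _) _; rewrite card_ffun card_ord.
Qed.

Lemma LRC_upper q n r rho (C : Defs.code 'I_q n) : is_LRC r rho C -> (1 <= rho)%N ->
  (0 < q)%N -> (#|C| ^ (r + rho - 1) <= q ^ (r * n))%N.
Proof.
move=> HL hrho hq.
have [D [V [TV hc Hag]]] := @grow _ _ _ _ C HL hrho #|[set: 'I_n]| [set: 'I_n] (leqnn _).
have hC : (#|C| <= q ^ #|D|)%N.
  suff: (#|C| <= #|'I_q| ^ #|D|)%N by rewrite card_ord.
  apply: count_inj => x y xC yC Hxy.
  by apply/ffunP => j; apply: (Hag x y xC yC Hxy); apply: (subsetP TV); rewrite inE.
have hV : (#|V| <= n)%N by apply: leq_trans (max_card _) _; rewrite card_ord.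
case: (posnP (r + rho - 1)) => [->|hN]; first by rewrite expn0 expn_gt0 hq.
apply: leq_trans (_ : (q ^ #|D|) ^ (r + rho - 1) <= _)%N.
  by rewrite leq_exp2r.
rewrite -expnM; apply: leq_pexp2l => //.
rewrite mulnC; apply: leq_trans hc _; by rewrite leq_mul2l hV orbT.
Qed.

Section Lower.
Variables (q n r rho N : nat) (hq : (0 < q)%N) (hN : (0 < N)%N) (hNr : (N <= r + rho - 1)%N).
Variable C0 : Defs.code 'I_q N.
Hypothesis hC0 : min_dist_ge C0 rho.

Let m := (n %/ N)%N.
Let d : 'I_q := Ordinal hq.
Let B := {ffun 'I_m -> {x : word 'I_q N | x \in C0}}.

Definition Fw (c : B) : word 'I_q n :=
  [ffun i : 'I_n => match (insub (i %/ N)%N : option 'I_m) with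
                    | Some b => val (c b) (Ordinal (ltn_pmod i hN))
                    | None => d end].

Lemma Fw_some c (j : 'I_n) (b : 'I_m) : (j %/ N)%N = b ->
  Fw c j = val (c b) (Ordinal (ltn_pmod j hN)).
Proof.
move=> hjb; rewrite /Fw ffunE; case: insubP => [b' _ eb'|].
  by have -> : b' = b by apply: val_inj; rewrite eb'.
by rewrite hjb ltn_ord.
Qed.

Lemma Fw_none c (j : 'I_n) : (m <= j %/ N)%N -> Fw c j = d.
Proof.
move=> hj; rewrite /Fw ffunE; case: insubP => [b' bm eb'|//].
by move: bm; rewrite ltnNge hj.
Qed.

Lemma idx_lt (b : 'I_m) (k : 'I_N) : (b * N + k < n)%N.
Proof.
have h1 := leq_trunc_div n N; have h2 := ltn_ord b; have h3 := ltn_ord k.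
rewrite -/m in h1; nia.
Qed.

Definition idx (b : 'I_m) (k : 'I_N) : 'I_n := Ordinal (idx_lt b k).

Lemma idx_div b k : ((idx b k) %/ N = b)%N.
Proof. by rewrite /= divnMDl // divn_small // addn0. Qed.

Lemma idx_mod b k : Ordinal (ltn_pmod (idx b k) hN) = k.
Proof. by apply: val_inj => /=; rewrite modnMDl modn_small. Qed.

Lemma Fw_idx c b k : Fw c (idx b k) = val (c b) k.
Proof. by rewrite (@Fw_some c _ _ (idx_div b k)) idx_mod. Qed.

Lemma Fw_inj : injective Fw.
Proof.
move=> c c' /ffunP H; apply/ffunP => b; apply: val_inj; apply/ffunP => k.
by have := H (idx b k); rewrite !Fw_idx.
Qed.

Definition Ccode : Defs.code 'I_q n := [set Fw c | c in [set: B]].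

Lemma Ccode_card : #|Ccode| = (#|C0| ^ m)%N.
Proof.
rewrite card_imset; last exact: Fw_inj.
by rewrite cardsT card_ffun card_sig card_ord.
Qed.

Lemma idx_inj b : injective (idx b).
Proof. by move=> k k' /(congr1 val) /= /addnI e; apply: val_inj. Qed.

Lemma Ccode_LRC : is_LRC r rho Ccode.
Proof.
apply/forallP => i; apply/existsP; exists [set j : 'I_n | j %/ N == i %/ N]%N.
rewrite inE eqxx /=; apply/andP; split.
  apply: leq_trans _ hNr.
  pose g (j : 'I_n) : 'I_N := Ordinal (ltn_pmod j hN).
  rewrite -(@card_in_imset _ _ g); first by apply: leq_trans (max_card _) _; rewrite card_ord.
  move=> j j'; rewrite !inE => /eqP hj /eqP hj' /(congr1 val) /= e.
  by apply: val_inj; rewrite /= (divn_eq j N) (divn_eq j' N) hj hj' e.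
apply/forallP => px; apply/implyP => /imsetP [x xC ->].
apply/forallP => py; apply/implyP => /imsetP [y yC ->]; apply/implyP => neq.
move: xC yC neq => /imsetP [c _ ->] /imsetP [c' _ ->] neq.
have [hi|hi] := ltnP (i %/ N)%N m; last first.
  case/negP: neq; apply/eqP/ffunP => j; rewrite [LHS]ffunE [RHS]ffunE; case: ifP => //.
  by rewrite inE => /eqP jb; rewrite !Fw_none // jb.
pose b : 'I_m := Ordinal hi.
have ncb : val (c b) != val (c' b).
  apply: contraNneq neq => e; apply/eqP/ffunP => j; rewrite [LHS]ffunE [RHS]ffunE; case: ifP => //.
  rewrite inE => /eqP jb.
  by rewrite (@Fw_some c j b jb) (@Fw_some c' j b jb) e.
have := hC0; move=> /forallP /(_ (val (c b))) /implyP /(_ (valP _)).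
move=> /forallP /(_ (val (c' b))) /implyP /(_ (valP _)) /implyP /(_ ncb) hd.
apply: leq_trans hd _; rewrite /hdist.
rewrite -(card_imset _ (@idx_inj b)); apply: subset_leq_card.
apply/subsetP => _ /imsetP [k kin ->].
have jR : idx b k \in [set j : 'I_n | j %/ N == i %/ N]%N by rewrite inE idx_div.
by rewrite inE [in X in X != _]ffunE [in X in _ != X]ffunE jR /= !Fw_idx; rewrite inE in kin.
Qed.

End Lower.

Theorem corollary2 (R : realType) (q r rho : nat) :
  (2 <= q)%N -> (1 <= r)%N -> (2 <= rho)%N ->
  exists_MDS q (r + rho - 1) rho ->
  R_LRC q r rho (0 : R) = ((r%:R / (r + rho - 1)%:R : R)%R)%:E.
Proof.
move=> hq hr hrho [C0 [hmd hcard]].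
have hN : (0 < r + rho - 1)%N by lia.
have hNr : (r + rho - 1 <= r + rho - 1)%N by [].
have hC0 : min_dist_ge C0 rho by case/andP: hmd.
have hC0card : #|C0| = (q ^ r)%N by rewrite hcard; congr (_ ^ _)%N; lia.
have hq0 : (0 < q)%N by lia.
set N := (r + rho - 1)%N in hN hNr C0 hmd hcard hC0 hC0card *.
have Lo : forall n, (q ^ (r * (n %/ N)) <= M_LRC q n r rho (0:R))%N.
  move=> n; rewrite /M_LRC.
  have <- : #|Ccode q n N hq0 hN C0| = (q ^ (r * (n %/ N)))%N.
    by rewrite (@Ccode_card q n r rho N hq0 hN hNr C0 hC0) hC0card -expnM.
  apply: (leq_bigmax_cond (Ccode q n N hq0 hN C0)).
  rewrite (@Ccode_LRC q n r rho N hq0 hN hNr C0 hC0) /=.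
  apply/forallP => x; apply/implyP => _; apply/forallP => y; apply/implyP => _.
  by apply/implyP => _; rewrite mul0r ler0n.
have Up : forall n, (M_LRC q n r rho (0:R) ^ N <= q ^ (r * n))%N.
  move=> n; rewrite /M_LRC.
  apply: (big_ind (fun k => k ^ N <= q ^ (r * n))%N).
  - by rewrite exp0n.
  - by move=> a b ha hb; rewrite /maxn; case: ifP.
  - move=> C /andP [HL _]; apply: LRC_upper HL _ hq0; lia.
rewrite /R_LRC.
apply: (@esup_squeeze R _ _ (2 * r%:R)%R) => -[|n].
  rewrite mulr0n invr0 mulr0 /harmonic /= invr1 mulr1.
  have hNR : (0 < N%:R :> R)%R by rewrite ltr0n.
  have hr0 : (0 <= r%:R :> R)%R by rewrite ler0n.
  have h1 : (r%:R / N%:R <= r%:R :> R)%R.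
    rewrite ler_pdivrMr // -{1}(mulr1 (r%:R)%R) ler_wpM2l // ler1n; done.
  have h0 : (0 <= r%:R / N%:R :> R)%R by rewrite divr_ge0 // ltW.
  apply/andP; split; lra.
set M := M_LRC q n.+1 r rho (0:R).
have LoN : (q ^ (r * (n.+1 %/ N)) <= M)%N := Lo n.+1.
have UpN : (M ^ N <= q ^ (r * n.+1))%N := Up n.+1.
have hM0 : (0 < M)%N by apply: leq_trans LoN; rewrite expn_gt0 hq0.
have hlq : (0 < ln (q%:R : R))%R by apply: ln_gt0; rewrite ltr1n.
have h1 : ((ln ((q ^ (r * (n.+1 %/ N)))%:R : R) <= ln (M%:R))%R).
  rewrite ler_ln; [by rewrite ler_nat | by rewrite posrE ltr0n expn_gt0 hq0 | by rewrite posrE ltr0n].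
rewrite natrX lnXn ?ltr0n // in h1.
have h2 : (ln ((M ^ N)%:R : R) <= ln ((q ^ (r * n.+1))%:R))%R.
  rewrite ler_ln; [by rewrite ler_nat | by rewrite posrE ltr0n expn_gt0 hM0 | by rewrite posrE ltr0n expn_gt0 hq0].
rewrite !natrX !lnXn ?ltr0n // in h2.
have h3 : (n.+2 <= (n.+1 %/ N).+1 * N)%N := ltn_ceil _ hN.
have := @real_bound R (ln M%:R / ln q%:R)%R r%:R%R (n.+1 %/ N)%:R%R n.+1%:R%R N%:R%R.
rewrite /harmonic /= natr1; apply.
- by rewrite ltr0n.
- by rewrite ler1n.
- by rewrite ler0n.
- by rewrite ler0n.
- by rewrite ler_pdivlMr // -natrM mulr_natl.
- by rewrite mulrA ler_pdivrMr // -natrM !mulr_natl.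
- by rewrite natr1 -natrM ler_nat.
Qed.
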